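(* Consider Algorithm FoBa-gdt with parameter $\epsilon>0$, and let $\beta^{(k)}$ with support $F^{(k)}$ be the iterate at the beginning of some iteration with $k\ge1$. Then for any $\bar\beta\in\mathbb{R}^d$ with support $\bar F$, $$\|\beta^{(k)}_{F^{(k)}-\bar F}\|^2=\|(\beta^{(k)}-\bar\beta)_{F^{(k)}-\bar F}\|^2\ge\frac{\delta^{(k)}}{\rho_+(1)}|F^{(k)}-\bar F|\ge\frac{\epsilon^2}{2\rho_+(1)^2}|F^{(k)}-\bar F|.$$
   Context: Let $Q:\mathbb{R}^d\to\mathbb{R}$ be convex and continuously differentiable. $e_j$ is the $j$-th standard basis vector, $\mathrm{supp}(\beta)=\{j:\beta_j\ne0\}$, $\|\beta\|_0=|\mathrm{supp}(\beta)|$, $\|\cdot\|$ is the Euclidean norm, $A-B$ is set difference, and $v_S$ is $v$ restricted to the coordinates in $S$. For $F\subseteq\{1,\dots,d\}$, $\hat\beta(F)$ denotes a minimizer of $Q$ over $\{\beta:\mathrm{supp}(\beta)\subseteq F\}$ (assumed to exist). For a positive integer $s$, the restricted strong convexity constants $\rho_-(s),\rho_+(s)>0$ are constants such that for all $\beta,\beta'\in\mathbb{R}^d$ with $\|\beta'-\beta\|_0\le s$: $\frac{\rho_-(s)}{2}\|\beta'-\beta\|^2\le Q(\beta')-Q(\beta)-\langle\nabla Q(\beta),\beta'-\beta\rangle\le\frac{\rho_+(s)}{2}\|\beta'-\beta\|^2.$ Algorithm FoBa has two variants: FoBa-obj (parameter $\delta>0$) and FoBa-gdt (parameter $\epsilon>0$).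 Initialize $F^{(0)}=\emptyset$, $\beta^{(0)}=0$, $k=0$, and repeat the following iteration. (1) Stopping test: FoBa-obj stops if $Q(\beta^{(k)})-\min_{\alpha\in\mathbb{R},\,j\notin F^{(k)}}Q(\beta^{(k)}+\alpha e_j)<\delta$; FoBa-gdt stops if $\|\nabla Q(\beta^{(k)})\|_\infty<\epsilon$. On stopping the output is $\beta^{(k)}$ with support $F^{(k)}$, and the algorithm is said to terminate at $k$. (2) Forward step: FoBa-obj picks $i^{(k)}\in\arg\min_{i\notin F^{(k)}}\min_\alpha Q(\beta^{(k)}+\alpha e_i)$; FoBa-gdt picks $i^{(k)}\in\arg\max_{i\notin F^{(k)}}|\nabla Q(\beta^{(k)})_i|$. Set $F^{(k+1)}=F^{(k)}\cup\{i^{(k)}\}$, $\beta^{(k+1)}=\hat\beta(F^{(k+1)})$, $\delta^{(k+1)}=Q(\beta^{(k)})-Q(\beta^{(k+1)})$, $k\leftarrow k+1$. (3) Backward step: repeat — if $F^{(k)}=\emptyset$ or $\min_{i\in F^{(k)}}Q(\beta^{(k)}-\beta^{(k)}_ie_i)-Q(\beta^{(k)})\ge\delta^{(k)}/2$, leave the backward step; otherwise pick $j\in\arg\min_{i\in F^{(k)}}Q(\beta^{(k)}-\beta^{(k)}_ie_i)$, set $F^{(k-1)}=F^{(k)}-\{j\}$, $\beta^{(k-1)}=\hat\beta(F^{(k-1)})$, $k\leftarrow k-1$ (where $\delta^{(k-1)}$ is the value recorded at the most recent forward step producing index $k-1$). Thus $|F^{(k)}|=k$ always. ''At the beginning of an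 iteration'' means the state just before a stopping test. *)

(* Defs.v *)
From Stdlib Require Import Reals.
From mathcomp Require Import all_boot.
Set Implicit Arguments. Unset Strict Implicit. Unset Printing Implicit Defensive.
Open Scope R_scope.

Definition vec (d : nat) := 'I_d -> R.

Definition vzero d : vec d := fun _ => 0.
Definition vadd d (x y : vec d) : vec d := fun i => x i + y i.
Definition vsub d (x y : vec d) : vec d := fun i => x i - y i.
Definition vscale d (a : R) (x : vec d) : vec d := fun i => a * x i.
Definition ej d (j : 'I_d) : vec d := fun i => if i == j then 1 else 0.

Definition nonzeroR (x : R) : bool := if Req_EM_T x 0 then false else true.
Definition supp d (x : vec d) : {set 'I_d} := [set i | nonzeroR (x i)].

Definition dot d (x y : vec d) : R := \big[Rplus/0]_(i < d) (x i * y i).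
Definition sqnorm_on d (A : {set 'I_d}) (x : vec d) : R :=
  \big[Rplus/0]_(i in A) (x i * x i).
Definition norm d (x : vec d) : R := sqrt (dot x x).

Definition convex d (Q : vec d -> R) : Prop :=
  forall x y t, 0 <= t <= 1 ->
    Q (vadd (vscale t x) (vscale (1 - t) y)) <= t * Q x + (1 - t) * Q y.

Definition is_gradient d (Q : vec d -> R) (g : vec d -> vec d) : Prop :=
  forall x eps, 0 < eps -> exists del, 0 < del /\
    forall h, norm h < del ->
      Rabs (Q (vadd x h) - Q x - dot (g x) h) <= eps * norm h.

Definition continuous_vec d (g : vec d -> vec d) : Prop :=
  forall x eps, 0 < eps -> exists del, 0 < del /\
    forall y, norm (vsub y x) < del -> norm (vsub (g y) (g x)) < eps.

Definition rsc d (Q : vec d -> R) (g : vec d -> vec d) (s : nat) (rm rp : R) : Prop :=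
  0 < rm /\ 0 < rp /\
  forall b b' : vec d, (#|supp (vsub b' b)| <= s)%N ->
    rm / 2 * (norm (vsub b' b))^2 <= Q b' - Q b - dot (g b) (vsub b' b) /\
    Q b' - Q b - dot (g b) (vsub b' b) <= rp / 2 * (norm (vsub b' b))^2.

Definition restricted_min d (Q : vec d -> R) (F : {set 'I_d}) (b : vec d) : Prop :=
  supp b \subset F /\ forall b', supp b' \subset F -> Q b <= Q b'.

(* state of FoBa: current support F^(k) (k = #|F|), iterate beta^(k),
   and recorded values delta^(m) (delta m = value recorded at the most recent
   forward step producing index m). *)
Record state (d : nat) := mkState {
  stF : {set 'I_d};
  stB : vec d;
  stDelta : nat -> R }.

Definition upd (f : nat -> R) (m : nat) (v : R) : nat -> R :=
  fun n => if n == m then v else f n.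

Definition Qdrop d (Q : vec d -> R) (b : vec d) (i : 'I_d) : R :=
  Q (vsub b (vscale (b i) (ej i))).

(* Execution of FoBa-gdt with parameter eps.
   fb_begin s : s is a state at the beginning of an iteration (just before a
                stopping test);
   fb_back s  : s is a state inside the backward loop (just before its test). *)
Inductive fb_begin d (Q : vec d -> R) (g : vec d -> vec d) (eps : R) : state d -> Prop :=
| fb_init : fb_begin Q g eps (mkState set0 (@vzero d) (fun _ => 0))
| fb_leave : forall s, fb_back Q g eps s ->
    (stF s = set0 \/
     forall i, i \in stF s ->
       Qdrop Q (stB s) i - Q (stB s) >= stDelta s #|stF s| / 2) ->
    fb_begin Q g eps s
with fb_back d (Q : vec d -> R) (g : vec d -> vec d) (eps : R) : state d -> Prop :=
| fb_forward : forall s i b',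
    fb_begin Q g eps s ->
    (* stopping test fails: not ||grad Q(beta^(k))||_inf < eps *)
    ~ (forall j, Rabs (g (stB s) j) < eps) ->
    i \notin stF s ->
    (forall j, j \notin stF s -> Rabs (g (stB s) j) <= Rabs (g (stB s) i)) ->
    restricted_min Q (i |: stF s) b' ->
    fb_back Q g eps
      (mkState (i |: stF s) b'
         (upd (stDelta s) (#|stF s|.+1) (Q (stB s) - Q b')))
| fb_backward : forall s j b',
    fb_back Q g eps s ->
    stF s != set0 ->
    j \in stF s ->
    (forall i, i \in stF s -> Qdrop Q (stB s) j <= Qdrop Q (stB s) i) ->
    Qdrop Q (stB s) j - Q (stB s) < stDelta s #|stF s| / 2 ->
    restricted_min Q (stF s :\ j) b' ->
    fb_back Q g eps (mkState (stF s :\ j) b' (stDelta s)).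

(* Main.v *)
From HB Require Import structures.
Require Import Defs.
From Stdlib Require Import Reals Lra Classical FunctionalExtensionality.
From mathcomp Require Import all_boot.
Open Scope R_scope.
Set Implicit Arguments.
Lemma RA : associative Rplus. Proof. by move=> x y z; rewrite Rplus_assoc. Qed.
HB.instance Definition _ := Monoid.isComLaw.Build R 0 Rplus RA Rplus_comm Rplus_0_l.

Lemma sum_single d (f : 'I_d -> R) i :
  (forall k, k != i -> f k = 0) -> \big[Rplus/0]_(k < d) f k = f i.
Proof.
move=> H; rewrite (bigD1 i) //= big1; first by rewrite Rplus_0_r.
by move=> k /H.
Qed.

Lemma nonzeroR_P x : nonzeroR x = true <-> x <> 0.
Proof. by rewrite /nonzeroR; case: Req_EM_T. Qed.

Lemma single_facts d (x : vec d) i : (forall k, k != i -> x k = 0) ->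
  (#|supp x| <= 1)%N /\ (forall y, dot y x = y i * x i) /\ norm x ^ 2 = x i * x i.
Proof.
move=> H; split.
  rewrite -(cards1 i); apply: subset_leq_card; apply/subsetP => k.
  rewrite inE => /nonzeroR_P nz; rewrite inE; apply/negPn/negP => /H; done.
have hd : forall y, dot y x = y i * x i.
  by move=> y; rewrite /dot (@sum_single _ (fun k => y k * x k) i) // => k /H ->; ring.
split=> //; rewrite /norm hd pow2_sqrt //; nra.
Qed.

Lemma rsc_up d (Q : vec d -> R) g rm rp b b' i : rsc Q g 1 rm rp ->
  (forall k, k != i -> b' k = b k) ->
  Q b' - Q b <= g b i * (b' i - b i) + rp / 2 * ((b' i - b i) * (b' i - b i)).
Proof.
move=> [_ [_ H]] Hk.
have [h1 [h2 h3]] := @single_facts d (vsub b' b) i (fun k hk => ltac:(rewrite /vsub (Hk k hk); ring)).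
have [_ u] := H b b' h1.
rewrite h2 h3 /vsub in u; lra.
Qed.

Lemma ej_same d (i : 'I_d) : ej i i = 1. Proof. by rewrite /ej eqxx. Qed.
Lemma ej_diff d (i k : 'I_d) : k != i -> ej i k = 0. Proof. by rewrite /ej => /negbTE ->. Qed.

Lemma supp_step d (F : {set 'I_d}) b t i : supp b \subset F ->
  supp (vadd b (vscale t (ej i))) \subset i |: F.
Proof.
move=> /subsetP sb; apply/subsetP => k; rewrite inE => /nonzeroR_P nz.
rewrite !inE; case: eqP => //= /eqP ki; apply: sb; rewrite inE; apply/nonzeroR_P.
by move: nz; rewrite /vadd /vscale ej_diff // Rmult_0_r Rplus_0_r.
Qed.

Lemma step_bound d (Q : vec d -> R) g rm rp b i : rsc Q g 1 rm rp ->
  Q (vadd b (vscale (- g b i / rp) (ej i))) <= Q b - (g b i * g b i) / (2 * rp).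
Proof.
move=> hr; have rp0 : 0 < rp by case: hr => _ [].
have := @rsc_up d Q g rm rp b (vadd b (vscale (- g b i / rp) (ej i))) i hr.
rewrite /vadd /vscale ej_same.
move=> /(_ (fun k hk => ltac:(rewrite ej_diff //; ring))).
have e : b i + - g b i / rp * 1 - b i = - g b i / rp by ring.
rewrite e => h.
have : g b i * (- g b i / rp) + rp / 2 * (- g b i / rp * (- g b i / rp)) = - (g b i * g b i) / (2 * rp) by field; lra.
lra.
Qed.

Lemma grad_zero d (Q : vec d -> R) g rm rp F b j : rsc Q g 1 rm rp ->
  restricted_min Q F b -> j \in F -> g b j = 0.
Proof.
move=> hr [sb mb] jF; have rp0 : 0 < rp by case: hr => _ [].
have := @step_bound _ Q g rm rp b j hr.
have := @supp_step _ F b (- g b j / rp) j sb.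
have e : j |: F = F by apply/setUidPr; rewrite sub1set.
rewrite e => /mb h1 h2.
have ip : 0 < / (2 * rp) by apply: Rinv_0_lt_compat; lra.
have : g b j * g b j * / (2 * rp) <= 0 by rewrite /Rdiv in h2; lra.
move=> h; have h' : g b j * g b j <= 0 by nra.
nra.
Qed.

Scheme fb_begin_mut := Induction for fb_begin Sort Prop
with fb_back_mut := Induction for fb_back Sort Prop.

Lemma forward_gain d (Q : vec d -> R) g rm rp eps F b i b' : rsc Q g 1 rm rp ->
  restricted_min Q F b -> ~ (forall j, Rabs (g b j) < eps) -> i \notin F ->
  (forall j, j \notin F -> Rabs (g b j) <= Rabs (g b i)) ->
  restricted_min Q (i |: F) b' -> 0 < eps ->
  Q b - Q b' >= eps ^ 2 / (2 * rp).
Proof.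
move=> hr hm hs iF hmax [_ hb'] he; have rp0 : 0 < rp by case: hr => _ [].
have [j hj] : exists j, ~ Rabs (g b j) < eps.
  by apply: not_all_ex_not.
have jF : j \notin F.
  apply/negP => jF; apply: hj; rewrite (@grad_zero _ Q g rm rp F b j hr hm jF) Rabs_R0 //.
have gi : eps <= Rabs (g b i) by have := hmax _ jF; lra.
have := @step_bound _ Q g rm rp b i hr.
have := hb' _ (@supp_step _ F b (- g b i / rp) i (proj1 hm)).
move=> h1 h2.
have sq : g b i * g b i = Rabs (g b i) * Rabs (g b i).
  by rewrite -Rabs_mult Rabs_right //; nra.
have ip : 0 < / (2 * rp) by apply: Rinv_0_lt_compat; lra.
have : eps ^ 2 <= g b i * g b i by rewrite sq; nra.
rewrite /Rdiv in h2 *; nra.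
Qed.

Definition Inv d (Q : vec d -> R) rp eps (s : state d) :=
  restricted_min Q (stF s) (stB s) /\
  forall m, (1 <= m)%N -> (m <= #|stF s|)%N -> stDelta s m >= eps ^ 2 / (2 * rp).

Lemma inv_all d (Q : vec d -> R) g rm rp eps : rsc Q g 1 rm rp -> 0 < eps ->
  forall s, fb_begin Q g eps s -> Inv Q rp eps s.
Proof.
move=> hr he s hs.
apply: (@fb_begin_mut d Q g eps (fun s _ => Inv Q rp eps s) (fun s _ => Inv Q rp eps s)) hs => //.
- split=> /=; last by move=> m m1; rewrite cards0 leqn0 => /eqP m0; rewrite m0 in m1.
  split.
    by apply/subsetP => k; rewrite inE /vzero => /nonzeroR_P.
  move=> b' sb'; have -> : b' = @vzero d; last by apply: Rle_refl.
  apply: functional_extensionality => k; rewrite /vzero.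
  case: (Req_EM_T (b' k) 0) => // nz.
  have : k \in supp b' by rewrite inE; apply/nonzeroR_P.
  by move/(subsetP sb'); rewrite inE.
- move=> s0 i b' _ [hm hd] hstop iF hmax hb'; split=> //= m m1.
  rewrite cardsU1 iF /upd => mle.
  case: eqP => [_|ne]; first exact: (@forward_gain _ Q g rm rp eps _ _ i b' hr hm hstop iF hmax hb' he).
  apply: hd => //; rewrite add1n leq_eqVlt ltnS in mle.
  by case/orP: mle => [/eqP//|].
- move=> s0 j b' _ [hm hd] _ _ _ _ hb'; split=> //= m m1 mle.
  apply: hd => //; apply: (leq_trans mle); apply: subset_leq_card; exact: subD1set.
Qed.

Lemma sum_lb d (A : {set 'I_d}) (f : 'I_d -> R) c :
  (forall i, i \in A -> c <= f i) -> INR #|A| * c <= \big[Rplus/0]_(i in A) f i.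
Proof.
move=> H; rewrite -big_enum cardE.
have : forall i, i \in enum A -> c <= f i by move=> i; rewrite mem_enum; apply: H.
elim: (enum A) => [|x l IH] hl; first by rewrite big_nil /= Rmult_0_l; apply: Rle_refl.
rewrite big_cons; change (size (x :: l)) with (size l).+1; rewrite S_INR.
have := hl x (mem_head _ _).
have := IH (fun i hi => hl i (@mem_behead _ (x :: l) _ hi)).
set S := (\big[_/_]_(j <- l) f j) => a b.
change ((INR (size l) + 1) * c <= f x + S); lra.
Qed.

Lemma leave_cond d (Q : vec d -> R) g eps s : fb_begin Q g eps s -> (1 <= #|stF s|)%N ->
  forall i, i \in stF s -> Qdrop Q (stB s) i - Q (stB s) >= stDelta s #|stF s| / 2.
Proof. by case=> [|s0 _ [e|h]] /=; [rewrite cards0 | rewrite e cards0 | ]. Qed.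

Theorem mainTheorem12 (d : nat) (Q : vec d -> R) (gQ : vec d -> vec d)
  (rho_m1 rho_p1 eps : R)
  (Hconv : convex Q) (Hgrad : is_gradient Q gQ) (Hcont : continuous_vec gQ)
  (Hrsc : rsc Q gQ 1 rho_m1 rho_p1) (Heps : 0 < eps)
  (s : state d) (Hs : fb_begin Q gQ eps s) (Hk : (1 <= #|stF s|)%N)
  (bbar : vec d) :
  let k := #|stF s| in
  let A := stF s :\: supp bbar in
  sqnorm_on A (stB s) = sqnorm_on A (vsub (stB s) bbar) /\
  sqnorm_on A (vsub (stB s) bbar) >= stDelta s k / rho_p1 * INR #|A| /\
  stDelta s k / rho_p1 * INR #|A| >= eps ^ 2 / (2 * rho_p1 ^ 2) * INR #|A|.
Proof.
move=> k A.
have rp0 : 0 < rho_p1 by case: Hrsc => _ [].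
have [hm hd] := inv_all Hrsc Heps Hs.
have hdk := hd k Hk (leqnn _).
have hleave : forall i, i \in stF s ->
    Qdrop Q (stB s) i - Q (stB s) >= stDelta s k / 2.
  exact: leave_cond Hs Hk.
have bA : forall i, i \in A -> bbar i = 0.
  move=> i; rewrite inE inE => /andP [ns _].
  by case: (Req_EM_T (bbar i) 0) => // nz; move: ns; rewrite /nonzeroR; case: Req_EM_T.
have e1 : sqnorm_on A (stB s) = sqnorm_on A (vsub (stB s) bbar).
  by apply: eq_bigr => i /bA; rewrite /vsub => ->; rewrite Rminus_0_r.
have n0 : 0 <= INR #|A| by apply: pos_INR.
split=> //; split; last first.
  have : eps ^ 2 / (2 * rho_p1 ^ 2) = (eps ^ 2 / (2 * rho_p1)) / rho_p1 by field; lra.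
  move=> ->; apply: Rle_ge; apply: Rmult_le_compat_r => //.
  rewrite /Rdiv; apply: Rmult_le_compat_r; last lra.
  by apply: Rlt_le; apply: Rinv_0_lt_compat.
rewrite -e1 Rmult_comm; apply: Rle_ge; apply: sum_lb => i iA.
have iF : i \in stF s by move: iA; rewrite inE => /andP [].
have hl := hleave i iF.
have g0 := grad_zero Hrsc hm iF.
have := @rsc_up _ Q gQ rho_m1 rho_p1 (stB s) (vsub (stB s) (vscale (stB s i) (ej i))) i Hrsc.
rewrite /vsub /vscale ej_same g0.
move=> /(_ (fun k hk => ltac:(rewrite ej_diff //; ring))) h.
rewrite /Qdrop /vsub /vscale in hl.
have e : stB s i - stB s i * 1 - stB s i = - stB s i by ring.
rewrite e in h.
have : stDelta s k <= rho_p1 * (stB s i * stB s i) by nra.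
move=> h2.
have -> : stDelta s k / rho_p1 = stDelta s k * / rho_p1 by [].
have ip : 0 < / rho_p1 by apply: Rinv_0_lt_compat.
have : stDelta s k * / rho_p1 <= rho_p1 * (stB s i * stB s i) * / rho_p1 by nra.
have -> : rho_p1 * (stB s i * stB s i) * / rho_p1 = stB s i * stB s i by field; lra.
done.
Qed.
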